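(* Let $M\subseteq N$ be models of $\mathrm{AA}_0$ such that $N$ is a cofinal extension of $M$ and $M\preccurlyeq_{\Sigma_0}N$. If $M$ and $N$ satisfy the collection axioms, then $M\preccurlyeq N$.
   Context: Structures are complete metric spaces of diameter at most $1$ in $L=\{+,\cdot,\wedge,\vee,0,1\}$ (operations $1$-Lipschitz, $d$ the only relation symbol); affine formulas are built from $1$ and $d(t_1,t_2)$ using $+$, real scalar multiples, $\sup$, $\inf$. $|x|=d(x,0)$; $x\le y$ means $x\wedge y=x$; $nx$, $x^n$ iterated sum/product. $\mathrm{AA}_0$ consists of (universally quantified): (A1) the identities of the nonnegative part of a lattice-ordered commutative ring with identity (commutative semiring axioms, lattice axioms, distributivity of $+,\cdot$ over $\wedge,\vee$, $0\le x$); (A2) $\inf_y d(x,(x\wedge y)+1)=1-|x|$ and $x\le x^2$; (A3) $d(x+z,y+z)=d(x,y)$; (A4) $d(y,z)\le d(xy,xz)+1-|x|$; (A5) $d(xy,xz)=d(x^ny,x^nz)\le d(y,z)$; (A6) $d(nx,ny)=d(x^n,y^n)=d(x,y)$, $n\ge1$; (A7) $|x\wedge y|+|x\vee y|=|x|+|y|$; (A8) $|xy+z|=|(x\wedge y)+z|$; (A9) $|x+y+z|=|(x\vee y)+z|$; (A10) $\inf_t d((x\wedge y)+t,y)=0$. Bounded quantifiers: $\sup_{x\le t}\phi(x):=\sup_x\phi(x\wedge t)$, $\inf_{x\le t}\phi(x):=\inf_x\phi(x\wedge t)$ ($t$ a term without $x$); $\Sigma_0$ formulas are affine formulas with only bounded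 quantifiers. $M\preccurlyeq_{\Sigma_0}N$ means $\phi^M(\bar a)=\phi^N(\bar a)$ for all $\Sigma_0$ formulas $\phi$ and $\bar a\in M$; $M\preccurlyeq N$ means this for all affine formulas. $N$ is a cofinal extension of $M$ if $M\subseteq N$ is a substructure and every $x\in N$ satisfies $x\le y$ for some $y\in M$. The collection axioms are, for every affine formula $\phi(x,\bar y,\bar z)$, the universal closures of $\inf_{x\le t}\sup_{\bar y}\phi(x,\bar y,\bar z)=\sup_s\inf_{x\le t}\sup_{\bar y\le s}\phi(x,\bar y,\bar z)$. *)

(* Defs.v *)
From Stdlib Require Import Reals List Bool Arith.
From Coquelicot Require Import Coquelicot.
Open Scope R_scope.

Record LStr := {
  car :> Type;
  dist : car -> car -> R;
  s_add : car -> car -> car;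
  s_mul : car -> car -> car;
  s_meet : car -> car -> car;
  s_join : car -> car -> car;
  s_zero : car;
  s_one : car;
  dist_eq0 : forall x y, dist x y = 0 <-> x = y;
  dist_sym : forall x y, dist x y = dist y x;
  dist_tri : forall x y z, dist x z <= dist x y + dist y z;
  dist_le1 : forall x y, dist x y <= 1;
  dist_complete : forall u : nat -> car,
    (forall eps, 0 < eps -> exists n0, forall m n, (n0 <= m)%nat -> (n0 <= n)%nat ->
        dist (u m) (u n) < eps) ->
    exists l, forall eps, 0 < eps -> exists n0, forall n, (n0 <= n)%nat -> dist (u n) l < eps;
  lip_add : forall x x' y y', dist (s_add x y) (s_add x' y) <= dist x x' /\
                              dist (s_add x y) (s_add x y') <= dist y y';
  lip_mul : forall x x' y y', dist (s_mul x y) (s_mul x' y) <= dist x x' /\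
                              dist (s_mul x y) (s_mul x y') <= dist y y';
  lip_meet : forall x x' y y', dist (s_meet x y) (s_meet x' y) <= dist x x' /\
                               dist (s_meet x y) (s_meet x y') <= dist y y';
  lip_join : forall x x' y y', dist (s_join x y) (s_join x' y) <= dist x x' /\
                               dist (s_join x y) (s_join x y') <= dist y y'
}.

Arguments dist {_}. Arguments s_add {_}. Arguments s_mul {_}.
Arguments s_meet {_}. Arguments s_join {_}. Arguments s_zero {_}. Arguments s_one {_}.

(** Supremum / infimum of a real function on a carrier (only applied to bounded
    functions, where this is the genuine sup / inf). *)
Definition Sup {T : Type} (f : T -> R) : R := real (Lub_Rbar (fun r => exists a, r = f a)).
Definition Inf {T : Type} (f : T -> R) : R := - Sup (fun a => - f a).

Inductive term :=
| tvar (n : nat) | tzero | tone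
| tadd (t u : term) | tmul (t u : term) | tmeet (t u : term) | tjoin (t u : term).

(** Formulas.  [fbsup x t phi] / [fbinf x t phi] are the bounded quantifiers
    sup_{x <= t} phi := sup_x phi(x meet t), inf_{x <= t} phi := inf_x phi(x meet t),
    taken as primitive abbreviations (their semantics below is literally that of
    sup_x phi(x meet t) for t not containing x). *)
Inductive formula :=
| fone
| fdist (t u : term)
| fplus (phi psi : formula)
| fscale (r : R) (phi : formula)
| fsup (x : nat) (phi : formula)
| finf (x : nat) (phi : formula)
| fbsup (x : nat) (t : term) (phi : formula)
| fbinf (x : nat) (t : term) (phi : formula).

Fixpoint t_occ (x : nat) (t : term) : bool :=
  match t with
  | tvar n => Nat.eqb n x
  | tzero | tone => false
  | tadd a b | tmul a b | tmeet a b | tjoin a b => t_occ x a || t_occ x b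
  end.

Fixpoint f_occ (x : nat) (phi : formula) : bool :=
  match phi with
  | fone => false
  | fdist t u => t_occ x t || t_occ x u
  | fplus a b => f_occ x a || f_occ x b
  | fscale _ a => f_occ x a
  | fsup y a | finf y a => negb (Nat.eqb x y) && f_occ x a
  | fbsup y t a | fbinf y t a => t_occ x t || (negb (Nat.eqb x y) && f_occ x a)
  end.

Fixpoint is_affine (phi : formula) : bool :=
  match phi with
  | fone | fdist _ _ => true
  | fplus a b => is_affine a && is_affine b
  | fscale _ a => is_affine a
  | fsup _ a | finf _ a => is_affine a
  | fbsup _ _ _ | fbinf _ _ _ => false
  end.

Fixpoint is_Sigma0 (phi : formula) : bool :=
  match phi with
  | fone | fdist _ _ => true
  | fplus a b => is_Sigma0 a && is_Sigma0 b
  | fscale _ a => is_Sigma0 a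
  | fsup _ _ | finf _ _ => false
  | fbsup x t a | fbinf x t a => negb (t_occ x t) && is_Sigma0 a
  end.

Section Sem.
Variable M : LStr.
Implicit Types x y z t : car M.

Definition upd (rho : nat -> M) (x : nat) (a : M) : nat -> M :=
  fun n => if Nat.eqb n x then a else rho n.

Fixpoint teval (rho : nat -> M) (t : term) : M :=
  match t with
  | tvar n => rho n
  | tzero => s_zero
  | tone => s_one
  | tadd a b => s_add (teval rho a) (teval rho b)
  | tmul a b => s_mul (teval rho a) (teval rho b)
  | tmeet a b => s_meet (teval rho a) (teval rho b)
  | tjoin a b => s_join (teval rho a) (teval rho b)
  end.

Fixpoint feval (rho : nat -> M) (phi : formula) : R :=
  match phi with
  | fone => 1
  | fdist t u => dist (teval rho t) (teval rho u)
  | fplus a b => feval rho a + feval rho b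
  | fscale r a => r * feval rho a
  | fsup x a => Sup (fun c : M => feval (upd rho x c) a)
  | finf x a => Inf (fun c : M => feval (upd rho x c) a)
  | fbsup x t a => Sup (fun c : M => feval (upd rho x (s_meet c (teval rho t))) a)
  | fbinf x t a => Inf (fun c : M => feval (upd rho x (s_meet c (teval rho t))) a)
  end.

Definition le (x y : M) : Prop := s_meet x y = x.
Definition nrm (x : M) : R := dist x s_zero.
Fixpoint nsum (n : nat) (x : M) : M :=
  match n with O => s_zero | S O => x | S m => s_add (nsum m x) x end.
Fixpoint npow (n : nat) (x : M) : M :=
  match n with O => s_one | S O => x | S m => s_mul (npow m x) x end.

Record AA0 : Prop := {
  (* A1: identities of the nonnegative part of a lattice-ordered commutative ring with 1 *)
  A1_add_assoc : forall x y z, s_add x (s_add y z) = s_add (s_add x y) z;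
  A1_add_comm : forall x y, s_add x y = s_add y x;
  A1_add_0 : forall x, s_add x s_zero = x;
  A1_mul_assoc : forall x y z, s_mul x (s_mul y z) = s_mul (s_mul x y) z;
  A1_mul_comm : forall x y, s_mul x y = s_mul y x;
  A1_mul_1 : forall x, s_mul x s_one = x;
  A1_mul_0 : forall x, s_mul x s_zero = s_zero;
  A1_mul_add : forall x y z, s_mul x (s_add y z) = s_add (s_mul x y) (s_mul x z);
  A1_meet_assoc : forall x y z, s_meet x (s_meet y z) = s_meet (s_meet x y) z;
  A1_meet_comm : forall x y, s_meet x y = s_meet y x;
  A1_join_assoc : forall x y z, s_join x (s_join y z) = s_join (s_join x y) z;
  A1_join_comm : forall x y, s_join x y = s_join y x;
  A1_meet_idem : forall x, s_meet x x = x;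
  A1_join_idem : forall x, s_join x x = x;
  A1_absorb1 : forall x y, s_meet x (s_join x y) = x;
  A1_absorb2 : forall x y, s_join x (s_meet x y) = x;
  A1_add_meet : forall x y z, s_add x (s_meet y z) = s_meet (s_add x y) (s_add x z);
  A1_add_join : forall x y z, s_add x (s_join y z) = s_join (s_add x y) (s_add x z);
  A1_mul_meet : forall x y z, s_mul x (s_meet y z) = s_meet (s_mul x y) (s_mul x z);
  A1_mul_join : forall x y z, s_mul x (s_join y z) = s_join (s_mul x y) (s_mul x z);
  A1_nonneg : forall x, le s_zero x;
  A2a : forall x, Inf (fun y => dist x (s_add (s_meet x y) s_one)) = 1 - nrm x;
  A2b : forall x, le x (s_mul x x);
  A3 : forall x y z, dist (s_add x z) (s_add y z) = dist x y;
  A4 : forall x y z, dist y z <= dist (s_mul x y) (s_mul x z) + 1 - nrm x;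
  A5 : forall n x y z, (1 <= n)%nat ->
         dist (s_mul x y) (s_mul x z) = dist (s_mul (npow n x) y) (s_mul (npow n x) z) /\
         dist (s_mul (npow n x) y) (s_mul (npow n x) z) <= dist y z;
  A6 : forall n x y, (1 <= n)%nat ->
         dist (nsum n x) (nsum n y) = dist x y /\ dist (npow n x) (npow n y) = dist x y;
  A7 : forall x y, nrm (s_meet x y) + nrm (s_join x y) = nrm x + nrm y;
  A8 : forall x y z, nrm (s_add (s_mul x y) z) = nrm (s_add (s_meet x y) z);
  A9 : forall x y z, nrm (s_add (s_add x y) z) = nrm (s_add (s_join x y) z);
  A10 : forall x y, Inf (fun t => dist (s_add (s_meet x y) t) y) = 0
}.

Definition coll_lhs (x t : nat) (ys : list nat) (phi : formula) : formula :=
  fbinf x (tvar t) (fold_right (fun (y : nat) (acc : formula) => fsup y acc) phi ys).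
Definition coll_rhs (x t s : nat) (ys : list nat) (phi : formula) : formula :=
  fsup s (fbinf x (tvar t) (fold_right (fun (y : nat) (acc : formula) => fbsup y (tvar s) acc) phi ys)).

Definition Collection : Prop :=
  forall (phi : formula) (x t s : nat) (ys : list nat),
    is_affine phi = true -> NoDup (x :: t :: s :: ys) ->
    f_occ t phi = false -> f_occ s phi = false ->
    forall rho : nat -> M, feval rho (coll_lhs x t ys phi) = feval rho (coll_rhs x t s ys phi).

End Sem.

Arguments upd {M}. Arguments feval {M}. Arguments teval {M}.

Record Embedding (M N : LStr) := {
  emb :> M -> N;
  emb_dist : forall x y, dist (emb x) (emb y) = dist x y;
  emb_add : forall x y, emb (s_add x y) = s_add (emb x) (emb y);
  emb_mul : forall x y, emb (s_mul x y) = s_mul (emb x) (emb y);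
  emb_meet : forall x y, emb (s_meet x y) = s_meet (emb x) (emb y);
  emb_join : forall x y, emb (s_join x y) = s_join (emb x) (emb y);
  emb_zero : emb s_zero = s_zero;
  emb_one : emb s_one = s_one
}.
Arguments emb {M N}.

Definition Cofinal {M N : LStr} (e : Embedding M N) : Prop :=
  forall y : N, exists x : M, le N y (e x).

Definition Sigma0_elementary {M N : LStr} (e : Embedding M N) : Prop :=
  forall phi, is_Sigma0 phi = true ->
    forall rho : nat -> M, feval rho phi = feval (fun n => e (rho n)) phi.

Definition Elementary {M N : LStr} (e : Embedding M N) : Prop :=
  forall phi, is_affine phi = true ->
    forall rho : nat -> M, feval rho phi = feval (fun n => e (rho n)) phi.

(* Main.v *)
Require Import Defs.
From Stdlib Require Import Reals List Lra Lia FunctionalExtensionality Bool.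
From Coquelicot Require Import Coquelicot.
Import Defs.
Open Scope R_scope.

Section SupLemmas.
Context {T : Type}.

Lemma Sup_spec (f : T -> R) (c0 : T) B :
  (forall c, f c <= B) ->
  (forall c, f c <= Sup f) /\ (forall b, (forall c, f c <= b) -> Sup f <= b).
Proof.
  intros HB. unfold Sup.
  destruct (Lub_Rbar_correct (fun r => exists a, r = f a)) as [Hub Hlub].
  assert (H1 : Rbar_le (f c0) (Lub_Rbar (fun r => exists a, r = f a)))
    by (apply Hub; exists c0; reflexivity).
  assert (H2 : Rbar_le (Lub_Rbar (fun r => exists a, r = f a)) B).
  { apply Hlub. intros x [a ->]. simpl. apply HB. }
  destruct (Lub_Rbar (fun r => exists a, r = f a)) as [r| |] eqn:E; simpl in H1, H2; try contradiction.
  simpl. split.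
  - intro c. assert (Rbar_le (f c) (Finite r)). { apply Hub. exists c; reflexivity. } exact H.
  - intros b Hb. assert (Rbar_le (Finite r) (Finite b)). { apply Hlub. intros x [a ->]. simpl. apply Hb. } exact H.
Qed.

Lemma Sup_ub (f : T -> R) B c : (forall c, f c <= B) -> f c <= Sup f.
Proof. intros HB. exact (proj1 (Sup_spec f c B HB) c). Qed.

Lemma Sup_lub (f : T -> R) (c0 : T) b : (forall c, f c <= b) -> Sup f <= b.
Proof. intros HB. exact (proj2 (Sup_spec f c0 b HB) b HB). Qed.

Lemma Inf_lb (f : T -> R) B c : (forall c, B <= f c) -> Inf f <= f c.
Proof. intros HB. unfold Inf.
  assert (- f c <= Sup (fun a => - f a)). { apply (Sup_ub (fun a => - f a) (-B)). intro x; specialize (HB x); lra. }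
  lra. Qed.

Lemma Inf_glb (f : T -> R) (c0 : T) b : (forall c, b <= f c) -> b <= Inf f.
Proof. intros HB. unfold Inf.
  assert (Sup (fun a => - f a) <= - b). { apply (Sup_lub _ c0). intro c; specialize (HB c); lra. }
  lra. Qed.

Lemma Sup_ext (f g : T -> R) : (forall c, f c = g c) -> Sup f = Sup g.
Proof. intros H. replace f with g; [reflexivity|]. apply functional_extensionality; intro; symmetry; auto. Qed.

Lemma Inf_ext (f g : T -> R) : (forall c, f c = g c) -> Inf f = Inf g.
Proof. intros H. replace f with g; [reflexivity|]. apply functional_extensionality; intro; symmetry; auto. Qed.

Lemma Sup_abs (f : T -> R) (c0 : T) B : (forall c, Rabs (f c) <= B) -> Rabs (Sup f) <= B.
Proof. intros H.
  assert (Sup f <= B). { apply (Sup_lub _ c0). intro c; specialize (H c). apply Rabs_le_between in H; lra. }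
  assert (f c0 <= Sup f). { apply (Sup_ub _ B). intro c; specialize (H c). apply Rabs_le_between in H; lra. }
  specialize (H c0). apply Rabs_le_between in H. apply Rabs_le_between. lra. Qed.

Lemma Inf_abs (f : T -> R) (c0 : T) B : (forall c, Rabs (f c) <= B) -> Rabs (Inf f) <= B.
Proof. intros H. unfold Inf. rewrite Rabs_Ropp. apply (Sup_abs _ c0). intro c. rewrite Rabs_Ropp. auto. Qed.

End SupLemmas.
Section SupAlg.
Context {T : Type}.

Lemma Sup_le (f g : T -> R) (c0 : T) B : (forall c, g c <= B) -> (forall c, f c <= g c) -> Sup f <= Sup g.
Proof. intros HB H. apply (Sup_lub _ c0). intro c. eapply Rle_trans; [apply H|]. apply (Sup_ub _ B); auto. Qed.

Lemma Inf_le (f g : T -> R) (c0 : T) B : (forall c, B <= f c) -> (forall c, f c <= g c) -> Inf f <= Inf g.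
Proof. intros HB H. apply (Inf_glb _ c0). intro c. eapply Rle_trans; [|apply H]. apply (Inf_lb _ B); auto. Qed.

Lemma Sup_plus (f : T -> R) (c0 : T) B k : (forall c, f c <= B) -> Sup (fun c => f c + k) = Sup f + k.
Proof. intros HB. apply Rle_antisym.
  - apply (Sup_lub _ c0). intro c. pose proof (Sup_ub f B c HB). lra.
  - assert (Sup f <= Sup (fun c => f c + k) - k). { apply (Sup_lub _ c0). intro c.
      pose proof (Sup_ub (fun c => f c + k) (B + k) c ltac:(intro x; specialize (HB x); lra)). simpl in H. lra. }
    lra.
Qed.

Lemma Inf_plus (f : T -> R) (c0 : T) B k : (forall c, B <= f c) -> Inf (fun c => f c + k) = Inf f + k.
Proof. intros HB. unfold Inf.
  rewrite (Sup_ext (fun a => - (f a + k)) (fun a => - f a + - k)) by (intro; cbv beta; ring).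
  rewrite (Sup_plus (fun a => - f a) c0 (-B)) by (intro x; specialize (HB x); lra). ring. Qed.

Lemma Sup_const (c0 : T) k : Sup (fun _ : T => k) = k.
Proof. apply Rle_antisym. apply (Sup_lub _ c0). intro; lra. apply (Sup_ub (fun _ : T => k) k c0). intro; lra. Qed.

Lemma Sup_scale (f : T -> R) (c0 : T) B r : 0 <= r -> (forall c, f c <= B) -> r * Sup f = Sup (fun c => r * f c).
Proof. intros Hr HB. destruct (Req_dec r 0) as [->|Hr0].
  - rewrite (Sup_ext (fun c => 0 * f c) (fun _ => 0)) by (intro; cbv beta; ring). rewrite (Sup_const c0). ring.
  - assert (0 < r) by lra. apply Rle_antisym.
    + assert (HS : Sup f <= Sup (fun c => r * f c) / r). { apply (Sup_lub _ c0). intro c.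
        pose proof (Sup_ub (fun c => r * f c) (r * B) c ltac:(intro x; specialize (HB x); nra)) as Hc. simpl in Hc.
        apply Rmult_le_reg_l with r; auto. field_simplify; lra. }
      apply Rmult_le_compat_l with (r := r) in HS; [|lra].
      field_simplify in HS; lra.
    + apply (Sup_lub _ c0). intro c. pose proof (Sup_ub f B c HB). nra.
Qed.

Lemma Inf_scale (f : T -> R) (c0 : T) B r : 0 <= r -> (forall c, B <= f c) -> r * Inf f = Inf (fun c => r * f c).
Proof. intros Hr HB. unfold Inf.
  rewrite (Sup_ext (fun a => - (r * f a)) (fun a => r * (- f a))) by (intro; cbv beta; ring).
  rewrite <- (Sup_scale (fun a => - f a) c0 (-B)) by (auto; intro x; specialize (HB x); lra). ring. Qed.

Lemma Sup_scale_neg (f : T -> R) (c0 : T) B r : r < 0 -> (forall c, Rabs (f c) <= B) -> r * Sup f = Inf (fun c => r * f c).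
Proof. intros Hr HB. unfold Inf.
  rewrite (Sup_ext (fun a => - (r * f a)) (fun a => (-r) * f a)) by (intro; cbv beta; ring).
  rewrite <- (Sup_scale f c0 B) by (try lra; intro x; specialize (HB x); apply Rabs_le_between in HB; lra). ring. Qed.

Lemma Inf_scale_neg (f : T -> R) (c0 : T) B r : r < 0 -> (forall c, Rabs (f c) <= B) -> r * Inf f = Sup (fun c => r * f c).
Proof. intros Hr HB. unfold Inf.
  rewrite (Sup_ext (fun a => r * f a) (fun a => (-r) * (- f a))) by (intro; cbv beta; ring).
  rewrite <- (Sup_scale (fun a => - f a) c0 B) by (try lra; intro x; specialize (HB x); apply Rabs_le_between in HB; lra). ring. Qed.

End SupAlg.

Lemma Sup_swap {T U : Type} (F : T -> U -> R) (c0 : T) (d0 : U) B :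
  (forall c d, F c d <= B) ->
  Sup (fun c => Sup (fun d => F c d)) = Sup (fun d => Sup (fun c => F c d)).
Proof. intros HB. apply Rle_antisym.
  - apply (Sup_lub _ c0). intro c. apply (Sup_lub _ d0). intro d.
    eapply Rle_trans; [apply (Sup_ub (fun c => F c d) B c); intro; auto|].
    apply (Sup_ub (fun d => Sup (fun c => F c d)) B d). intro x. apply (Sup_lub _ c0). intro; auto.
  - apply (Sup_lub _ d0). intro d. apply (Sup_lub _ c0). intro c.
    eapply Rle_trans; [apply (Sup_ub (fun d => F c d) B d); intro; auto|].
    apply (Sup_ub (fun c => Sup (fun d => F c d)) B c). intro x. apply (Sup_lub _ d0). intro; auto.
Qed.

Lemma Inf_swap {T U : Type} (F : T -> U -> R) (c0 : T) (d0 : U) B :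
  (forall c d, B <= F c d) ->
  Inf (fun c => Inf (fun d => F c d)) = Inf (fun d => Inf (fun c => F c d)).
Proof. intros HB. unfold Inf.
  rewrite (Sup_ext (fun a => - - Sup (fun a0 => - F a a0)) (fun a => Sup (fun a0 => - F a a0))) by (intro; cbv beta; ring).
  rewrite (Sup_ext (fun a => - - Sup (fun a0 => - F a0 a)) (fun a => Sup (fun a0 => - F a0 a))) by (intro; cbv beta; ring).
  rewrite (Sup_swap (fun c d => - F c d) c0 d0 (-B)). reflexivity. intros c d; specialize (HB c d); lra. Qed.
Section Basics.
Variable K : LStr.

Lemma dist_nonneg (x y : K) : 0 <= dist x y.
Proof.
  pose proof (dist_tri K x y x) as H. rewrite (dist_sym K y x) in H.
  assert (dist x x = 0) by (apply (dist_eq0 K); reflexivity). lra.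
Qed.

Lemma upd_same (rho : nat -> K) v c : upd rho v c v = c.
Proof. unfold upd. rewrite Nat.eqb_refl. reflexivity. Qed.

Lemma upd_other (rho : nat -> K) v c w : w <> v -> upd rho v c w = rho w.
Proof. intros H. unfold upd. destruct (Nat.eqb_spec w v); congruence. Qed.

Lemma upd_comm (rho : nat -> K) v w a b : v <> w ->
  upd (upd rho v a) w b = upd (upd rho w b) v a.
Proof. intros H. apply functional_extensionality; intro n. unfold upd.
  destruct (Nat.eqb_spec n w); destruct (Nat.eqb_spec n v); subst; congruence. Qed.

Lemma upd_shadow (rho : nat -> K) v a b : upd (upd rho v a) v b = upd rho v b.
Proof. apply functional_extensionality; intro n. unfold upd.
  destruct (Nat.eqb_spec n v); reflexivity. Qed.

End Basics.

Fixpoint fbound (phi : formula) : R :=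
  match phi with
  | fone => 1 | fdist _ _ => 1
  | fplus a b => fbound a + fbound b
  | fscale r a => Rabs r * fbound a
  | fsup _ a | finf _ a | fbsup _ _ a | fbinf _ _ a => fbound a
  end.

Lemma feval_bound (K : LStr) phi : forall (rho : nat -> K), Rabs (feval rho phi) <= fbound phi.
Proof.
  induction phi; intros rho; simpl.
  - rewrite Rabs_R1; lra.
  - rewrite Rabs_pos_eq by apply dist_nonneg. apply dist_le1.
  - eapply Rle_trans; [apply Rabs_triang|]. specialize (IHphi1 rho); specialize (IHphi2 rho); lra.
  - rewrite Rabs_mult. apply Rmult_le_compat_l; [apply Rabs_pos| auto].
  - apply (Sup_abs _ s_zero). intro; auto.
  - apply (Inf_abs _ s_zero). intro; auto.
  - apply (Sup_abs _ s_zero). intro; auto.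
  - apply (Inf_abs _ s_zero). intro; auto.
Qed.

Lemma feval_ub (K : LStr) phi (rho : nat -> K) : feval rho phi <= fbound phi.
Proof. pose proof (feval_bound K phi rho) as H. apply Rabs_le_between in H; lra. Qed.
Lemma feval_lb (K : LStr) phi (rho : nat -> K) : - fbound phi <= feval rho phi.
Proof. pose proof (feval_bound K phi rho) as H. apply Rabs_le_between in H; lra. Qed.

Fixpoint tallv (P : nat -> Prop) (t : term) : Prop :=
  match t with
  | tvar n => P n
  | tzero | tone => True
  | tadd a b | tmul a b | tmeet a b | tjoin a b => tallv P a /\ tallv P b
  end.

Fixpoint allv (P : nat -> Prop) (phi : formula) : Prop :=
  match phi with
  | fone => True
  | fdist t u => tallv P t /\ tallv P u
  | fplus a b => allv P a /\ allv P b
  | fscale _ a => allv P a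
  | fsup x a | finf x a => P x /\ allv P a
  | fbsup x t a | fbinf x t a => P x /\ tallv P t /\ allv P a
  end.

Lemma tallv_tocc P t v : tallv P t -> ~ P v -> t_occ v t = false.
Proof.
  induction t; simpl; intros H Hv; try reflexivity;
  try (destruct H as [H1 H2]; rewrite IHt1, IHt2 by auto; reflexivity).
  destruct (Nat.eqb_spec n v); subst; tauto.
Qed.

Lemma allv_focc P phi v : allv P phi -> ~ P v -> f_occ v phi = false.
Proof.
  induction phi; simpl; intros H Hv.
  - reflexivity.
  - destruct H. rewrite (tallv_tocc P t), (tallv_tocc P u) by auto. reflexivity.
  - destruct H. rewrite IHphi1, IHphi2 by auto. reflexivity.
  - auto.
  - destruct H. rewrite IHphi by auto. apply andb_false_r.
  - destruct H. rewrite IHphi by auto. apply andb_false_r.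
  - destruct H as [? [? ?]]. rewrite (tallv_tocc P t), IHphi by auto. rewrite andb_false_r. reflexivity.
  - destruct H as [? [? ?]]. rewrite (tallv_tocc P t), IHphi by auto. rewrite andb_false_r. reflexivity.
Qed.

Lemma tallv_mono (P Q : nat -> Prop) t : (forall v, P v -> Q v) -> tallv P t -> tallv Q t.
Proof. induction t; simpl; intuition. Qed.

Lemma allv_mono (P Q : nat -> Prop) phi : (forall v, P v -> Q v) -> allv P phi -> allv Q phi.
Proof. induction phi; simpl; intros H; intuition eauto using tallv_mono. Qed.

Section Indep.
Variable K : LStr.

Lemma teval_indep t v (rho : nat -> K) c : t_occ v t = false -> teval (upd rho v c) t = teval rho t.
Proof.
  induction t; simpl; intros H; try reflexivity;
  try (apply orb_false_iff in H; destruct H; rewrite IHt1, IHt2 by auto; reflexivity).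
  unfold upd. rewrite H. reflexivity.
Qed.

Lemma feval_indep phi : forall v (rho : nat -> K) c, f_occ v phi = false ->
  feval (upd rho v c) phi = feval rho phi.
Proof.
  induction phi; simpl; intros v rho c H.
  - reflexivity.
  - apply orb_false_iff in H; destruct H. rewrite !teval_indep by auto. reflexivity.
  - apply orb_false_iff in H; destruct H. rewrite IHphi1, IHphi2 by auto. reflexivity.
  - rewrite IHphi by auto. reflexivity.
  - apply Sup_ext; intro d. destruct (Nat.eqb_spec v x).
    + subst. rewrite upd_shadow. reflexivity.
    + simpl in H. rewrite upd_comm by auto. apply IHphi; auto.
  - apply Inf_ext; intro d. destruct (Nat.eqb_spec v x).
    + subst. rewrite upd_shadow. reflexivity.
    + simpl in H. rewrite upd_comm by auto. apply IHphi; auto.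
  - apply orb_false_iff in H; destruct H as [Ht H].
    apply Sup_ext; intro d. rewrite teval_indep by auto. destruct (Nat.eqb_spec v x).
    + subst. rewrite upd_shadow. reflexivity.
    + simpl in H. rewrite upd_comm by auto. apply IHphi; auto.
  - apply orb_false_iff in H; destruct H as [Ht H].
    apply Inf_ext; intro d. rewrite teval_indep by auto. destruct (Nat.eqb_spec v x).
    + subst. rewrite upd_shadow. reflexivity.
    + simpl in H. rewrite upd_comm by auto. apply IHphi; auto.
Qed.
End Indep.

Fixpoint tsub (y s : nat) (t : term) : term :=
  match t with
  | tvar n => if Nat.eqb n y then tmeet (tvar y) (tvar s) else tvar n
  | tzero => tzero | tone => tone
  | tadd a b => tadd (tsub y s a) (tsub y s b)
  | tmul a b => tmul (tsub y s a) (tsub y s b)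
  | tmeet a b => tmeet (tsub y s a) (tsub y s b)
  | tjoin a b => tjoin (tsub y s a) (tsub y s b)
  end.

Fixpoint fsub (y s : nat) (phi : formula) : formula :=
  match phi with
  | fone => fone
  | fdist t u => fdist (tsub y s t) (tsub y s u)
  | fplus a b => fplus (fsub y s a) (fsub y s b)
  | fscale r a => fscale r (fsub y s a)
  | fsup z a => if Nat.eqb z y then fsup z a else fsup z (fsub y s a)
  | finf z a => if Nat.eqb z y then finf z a else finf z (fsub y s a)
  | _ => phi
  end.

Lemma teval_tsub (K : LStr) y s t (rho : nat -> K) :
  teval rho (tsub y s t) = teval (upd rho y (s_meet (rho y) (rho s))) t.
Proof.
  induction t; simpl; try reflexivity; try (rewrite IHt1, IHt2; reflexivity).
  unfold upd. destruct (Nat.eqb_spec n y); subst; simpl; try rewrite Nat.eqb_refl; reflexivity.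
Qed.

Lemma feval_fsub (K : LStr) y s phi : is_affine phi = true -> allv (fun v => v <> s) phi ->
  forall rho : nat -> K, feval rho (fsub y s phi) = feval (upd rho y (s_meet (rho y) (rho s))) phi.
Proof.
  induction phi; simpl; intros Ha Hv rho; try discriminate.
  - reflexivity.
  - rewrite !teval_tsub. reflexivity.
  - apply andb_true_iff in Ha; destruct Ha, Hv. rewrite IHphi1, IHphi2 by auto. reflexivity.
  - rewrite IHphi by auto. reflexivity.
  - destruct Hv as [Hx Hv]. destruct (Nat.eqb_spec x y).
    + subst. simpl. apply Sup_ext; intro d. rewrite upd_shadow. reflexivity.
    + simpl. apply Sup_ext; intro d. rewrite IHphi by auto.
      rewrite upd_other by auto. rewrite (upd_other _ _ _ _ s) by auto.
      rewrite upd_comm by auto. reflexivity.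
  - destruct Hv as [Hx Hv]. destruct (Nat.eqb_spec x y).
    + subst. simpl. apply Inf_ext; intro d. rewrite upd_shadow. reflexivity.
    + simpl. apply Inf_ext; intro d. rewrite IHphi by auto.
      rewrite upd_other by auto. rewrite (upd_other _ _ _ _ s) by auto.
      rewrite upd_comm by auto. reflexivity.
Qed.

Lemma tallv_tsub P y s t : tallv P t -> P s -> tallv P (tsub y s t).
Proof. induction t; simpl; intuition. destruct (Nat.eqb_spec n y); subst; simpl; auto. Qed.

Lemma allv_fsub P y s phi : allv P phi -> P s -> allv P (fsub y s phi).
Proof.
  induction phi; simpl; intuition auto using tallv_tsub.
  - destruct (Nat.eqb_spec x y); simpl; auto.
  - destruct (Nat.eqb_spec x y); simpl; auto.
Qed.

Lemma affine_fsub y s phi : is_affine phi = true -> is_affine (fsub y s phi) = true.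
Proof.
  induction phi; simpl; intros H; auto; try discriminate.
  - apply andb_true_iff in H; destruct H. rewrite IHphi1, IHphi2 by auto. reflexivity.
  - destruct (Nat.eqb x y); simpl; auto.
  - destruct (Nat.eqb x y); simpl; auto.
Qed.
Fixpoint close (pre : list (bool * nat)) (th : formula) : formula :=
  match pre with
  | nil => th
  | (b, v) :: r => if b then fsup v (close r th) else finf v (close r th)
  end.

Definition mono (K : LStr) (b : bool) (v : nat) (th : formula) : Prop :=
  forall (rho : nat -> K) c c', le K c c' ->
    if b then feval (upd rho v c) th <= feval (upd rho v c') th
    else feval (upd rho v c') th <= feval (upd rho v c) th.

Definition indep (K : LStr) v th : Prop := forall (rho : nat -> K) c, feval (upd rho v c) th = feval rho th.
Definition equivK (K : LStr) a b : Prop := forall (rho : nat -> K), feval rho a = feval rho b.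

Lemma close_app p1 p2 th : close (p1 ++ p2) th = close p1 (close p2 th).
Proof. induction p1 as [|[b v] p1 IH]; simpl; auto. rewrite IH. reflexivity. Qed.

Lemma affine_close pre th : is_affine th = true -> is_affine (close pre th) = true.
Proof. induction pre as [|[[|] v] p IH]; simpl; auto. Qed.

Lemma focc_close pre th v : f_occ v th = false -> f_occ v (close pre th) = false.
Proof. induction pre as [|[[|] w] p IH]; simpl; intros H; auto; rewrite IH by auto; apply andb_false_r. Qed.

Section CloseK.
Variable K : LStr.

Lemma close_congr pre X Y : equivK K X Y -> equivK K (close pre X) (close pre Y).
Proof.
  intros H. induction pre as [|[[|] w] p IH]; simpl; intros rho; auto.
  - apply Sup_ext; intro; apply IH.
  - apply Inf_ext; intro; apply IH.
Qed.

Lemma mono_close b v th pre : mono K b v th -> ~ In v (map snd pre) -> mono K b v (close pre th).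
Proof.
  intros H. induction pre as [|[q w] p IH]; simpl; intros Hn; auto.
  assert (Hw : w <> v) by tauto. assert (Hp : ~ In v (map snd p)) by tauto.
  specialize (IH Hp). intros rho c c' Hle.
  destruct q; simpl.
  - destruct b.
    + apply (Sup_le _ _ s_zero (fbound (close p th))). intro; apply feval_ub.
      intro d. rewrite !(upd_comm _ _ v w) by auto. exact (IH (upd rho w d) c c' Hle).
    + apply (Sup_le _ _ s_zero (fbound (close p th))). intro; apply feval_ub.
      intro d. rewrite !(upd_comm _ _ v w) by auto. exact (IH (upd rho w d) c c' Hle).
  - destruct b.
    + apply (Inf_le _ _ s_zero (- fbound (close p th))). intro; apply feval_lb.
      intro d. rewrite !(upd_comm _ _ v w) by auto. exact (IH (upd rho w d) c c' Hle).
    + apply (Inf_le _ _ s_zero (- fbound (close p th))). intro; apply feval_lb.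
      intro d. rewrite !(upd_comm _ _ v w) by auto. exact (IH (upd rho w d) c c' Hle).
Qed.

Lemma indep_close v th pre : indep K v th -> ~ In v (map snd pre) -> indep K v (close pre th).
Proof.
  intros H. induction pre as [|[q w] p IH]; simpl; intros Hn; auto.
  assert (Hw : w <> v) by tauto. assert (Hp : ~ In v (map snd p)) by tauto.
  specialize (IH Hp). intros rho c. destruct q; simpl.
  - apply Sup_ext; intro d. rewrite (upd_comm _ _ v w) by auto. apply IH.
  - apply Inf_ext; intro d. rewrite (upd_comm _ _ v w) by auto. apply IH.
Qed.

Lemma close_plus_l pre X Y : (forall v, In v (map snd pre) -> indep K v Y) ->
  forall rho : nat -> K, feval rho (close pre X) + feval rho Y = feval rho (close pre (fplus X Y)).
Proof.
  induction pre as [|[q w] p IH]; simpl; intros HI rho; auto.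
  destruct q; simpl.
  - rewrite <- (Sup_plus _ s_zero (fbound (close p X))) by (intro; apply feval_ub).
    apply Sup_ext; intro d. rewrite <- IH by auto. f_equal. symmetry. apply HI; auto.
  - rewrite <- (Inf_plus _ s_zero (- fbound (close p X))) by (intro; apply feval_lb).
    apply Inf_ext; intro d. rewrite <- IH by auto. f_equal. symmetry. apply HI; auto.
Qed.

Lemma close_plus_r pre X Y : (forall v, In v (map snd pre) -> indep K v X) ->
  forall rho : nat -> K, feval rho X + feval rho (close pre Y) = feval rho (close pre (fplus X Y)).
Proof.
  intros HI rho. rewrite Rplus_comm. rewrite close_plus_l by auto.
  apply close_congr. intro; simpl; ring.
Qed.

Definition flipr (r : R) (pre : list (bool * nat)) : list (bool * nat) :=
  if Rlt_dec r 0 then map (fun p => (negb (fst p), snd p)) pre else pre.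

Lemma flipr_snd r pre : map snd (flipr r pre) = map snd pre.
Proof. unfold flipr. destruct (Rlt_dec r 0); auto. rewrite map_map. simpl. reflexivity. Qed.

Lemma close_scale r pre X : forall rho : nat -> K,
  r * feval rho (close pre X) = feval rho (close (flipr r pre) (fscale r X)).
Proof.
  unfold flipr. destruct (Rlt_dec r 0) as [Hr|Hr].
  - induction pre as [|[q w] p IH]; simpl; intros rho; auto.
    destruct q; simpl.
    + rewrite (Sup_scale_neg _ s_zero (fbound (close p X))) by (auto; intro; apply feval_bound).
      apply Inf_ext; intro d. apply IH.
    + rewrite (Inf_scale_neg _ s_zero (fbound (close p X))) by (auto; intro; apply feval_bound).
      apply Sup_ext; intro d. apply IH.
  - induction pre as [|[q w] p IH]; simpl; intros rho; auto.
    destruct q; simpl.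
    + rewrite (Sup_scale _ s_zero (fbound (close p X))) by (try lra; intro; apply feval_ub).
      apply Sup_ext; intro d. apply IH.
    + rewrite (Inf_scale _ s_zero (- fbound (close p X))) by (try lra; intro; apply feval_lb).
      apply Inf_ext; intro d. apply IH.
Qed.

Lemma mono_scale r b v th : mono K b v th ->
  mono K (if Rlt_dec r 0 then negb b else b) v (fscale r th).
Proof.
  intros H rho c c' Hle. specialize (H rho c c' Hle). simpl.
  destruct (Rlt_dec r 0); destruct b; simpl in *; nra.
Qed.

End CloseK.
Section Meet.
Variable K : LStr.
Hypothesis HA : AA0 K.

Lemma meet_idem (c : K) : s_meet c c = c.
Proof. apply (A1_meet_idem K HA). Qed.

Lemma le_meet_r (d e : K) : le K (s_meet d e) e.
Proof. unfold le. rewrite <- (A1_meet_assoc K HA). rewrite meet_idem. reflexivity. Qed.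

Lemma meet_shift (d s s' : K) : le K s s' -> s_meet (s_meet d s) s' = s_meet d s.
Proof. unfold le. intros H. rewrite <- (A1_meet_assoc K HA). rewrite H. reflexivity. Qed.

Lemma le_refl (c : K) : le K c c.
Proof. unfold le. apply meet_idem. Qed.
End Meet.

Section Swap.
Variable K : LStr.
Hypothesis HA : AA0 K.
Hypothesis HC : Collection K.

Lemma swap_inf G A y s v sc :
  is_affine A = true -> equivK K G A -> f_occ s A = false -> f_occ sc A = false ->
  NoDup (y :: s :: sc :: v :: nil) -> mono K false v G ->
  forall rho : nat -> K,
    feval rho (fbsup y (tvar s) (finf v G)) = feval rho (finf v (fbsup y (tvar s) G)).
Proof.
  intros HAf HGA Hs Hsc Hnd Hm rho.
  assert (Hys : y <> s) by (intro; subst; inversion Hnd; simpl in *; tauto).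
  assert (Hysc : y <> sc) by (intro; subst; inversion Hnd; simpl in *; tauto).
  assert (Hyv : y <> v) by (intro; subst; inversion Hnd; simpl in *; tauto).
  assert (Hssc : s <> sc) by (intro; subst; inversion Hnd; inversion H2; simpl in *; tauto).
  assert (Hsv : s <> v) by (intro; subst; inversion Hnd; inversion H2; simpl in *; tauto).
  assert (Hscv : sc <> v) by (intro; subst; inversion Hnd; inversion H2; inversion H6; simpl in *; tauto).
  pose proof (HC (fscale (-1) A) y s sc (v :: nil)) as Hc.
  specialize (Hc ltac:(simpl; auto) Hnd ltac:(simpl; auto) ltac:(simpl; auto) rho).
  unfold coll_lhs, coll_rhs in Hc. cbn [fold_right feval teval] in Hc.
  cbn [feval teval].
  assert (E1 : Inf (fun c => Sup (fun d => -1 * feval (upd (upd rho y (s_meet c (rho s))) v d) A))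
             = - Sup (fun c => Inf (fun d => feval (upd (upd rho y (s_meet c (rho s))) v d) G))).
  { unfold Inf. f_equal. apply Sup_ext; intro c. f_equal. apply Sup_ext; intro d. rewrite HGA. ring. }
  assert (E2 : forall e c, Sup (fun d => -1 * feval (upd (upd (upd rho sc e) y (s_meet c (upd rho sc e s))) v
                       (s_meet d (upd (upd rho sc e) y (s_meet c (upd rho sc e s)) sc))) A)
                = - feval (upd (upd rho v e) y (s_meet c (upd rho v e s))) G).
  { intros e c. rewrite (upd_other _ _ _ _ s) by auto.
    rewrite (upd_other _ _ _ _ sc) by auto. rewrite upd_same.
    rewrite (upd_other _ _ _ _ s) by auto.
    rewrite (upd_comm _ _ v y) by auto.
    set (r' := upd rho y (s_meet c (rho s))).
    assert (Hx : forall d, feval (upd (upd (upd rho sc e) y (s_meet c (rho s))) v (s_meet d e)) A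
                       = feval (upd r' v (s_meet d e)) G).
    { intro d. rewrite HGA. rewrite (upd_comm _ _ sc y) by auto. rewrite (upd_comm _ _ sc v) by auto.
      apply feval_indep; auto. }
    rewrite (Sup_ext _ (fun d => - feval (upd r' v (s_meet d e)) G)) by (intro d; rewrite Hx; ring).
    apply Rle_antisym.
    - apply (Sup_lub _ s_zero). intro d. pose proof (Hm r' (s_meet d e) e (le_meet_r K HA d e)). simpl in H. lra.
    - pose proof (Sup_ub (fun d => - feval (upd r' v (s_meet d e)) G) (fbound G) e) as H.
      simpl in H. rewrite meet_idem in H by auto. apply H. intro; pose proof (feval_lb K G (upd r' v (s_meet c0 e))). lra. }
  rewrite E1 in Hc.
  rewrite (Sup_ext (fun e => Inf (fun c => Sup (fun d => -1 * feval (upd (upd (upd rho sc e) y (s_meet c (upd rho sc e s))) v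
                       (s_meet d (upd (upd rho sc e) y (s_meet c (upd rho sc e s)) sc))) A)))
     (fun e => Inf (fun c => - feval (upd (upd rho v e) y (s_meet c (upd rho v e s))) G))) in Hc
    by (intro e; apply Inf_ext; intro c; apply E2).
  unfold Inf at 2 in Hc.
  unfold Inf at 2.
  assert (E3 : Sup (fun e => - Sup (fun a => - - feval (upd (upd rho v e) y (s_meet a (upd rho v e s))) G))
             = Sup (fun e => - Sup (fun a => feval (upd (upd rho v e) y (s_meet a (upd rho v e s))) G))).
  { apply Sup_ext; intro e; f_equal; apply Sup_ext; intro; ring. }
  lra.
Qed.

End Swap.
Lemma NoDup4 (a b c d : nat) : a <> b -> a <> c -> a <> d -> b <> c -> b <> d -> c <> d ->
  NoDup (a :: b :: c :: d :: nil).
Proof. intros. repeat constructor; simpl; intuition. Qed.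

Section Push.
Variable K : LStr.
Hypothesis HA : AA0 K.
Hypothesis HC : Collection K.

Lemma push y s sc : forall pre th al,
  is_affine al = true -> equivK K th al -> f_occ s al = false -> f_occ sc al = false ->
  NoDup (map snd pre) ->
  (forall v, In v (map snd pre) -> v <> y /\ v <> s /\ v <> sc) ->
  y <> s -> y <> sc -> s <> sc ->
  (forall b v, In (b, v) pre -> mono K b v th) ->
  equivK K (fbsup y (tvar s) (close pre th)) (close pre (fbsup y (tvar s) th)).
Proof.
  induction pre as [|[q w] p IH]; intros th al Haf Heq Hs Hsc Hnd Hv Hys Hysc Hssc Hm.
  - intro rho; reflexivity.
  - simpl in Hnd. inversion Hnd as [|? ? Hnin Hnd']. subst.
    assert (Hw : w <> y /\ w <> s /\ w <> sc) by (apply Hv; simpl; auto).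
    destruct Hw as [Hwy [Hws Hwsc]].
    assert (IH' : equivK K (fbsup y (tvar s) (close p th)) (close p (fbsup y (tvar s) th))).
    { apply (IH th al); auto. intros; apply Hv; simpl; auto. intros; apply Hm; simpl; auto. }
    assert (HGA : equivK K (close p th) (close p al)) by (apply close_congr; auto).
    assert (Hmw : mono K q w (close p th)) by (apply mono_close; auto; apply Hm; simpl; auto).
    destruct q.
    + intro rho. cbn [close feval teval].
      rewrite (Sup_swap (fun c d => feval (upd (upd rho y (s_meet c (rho s))) w d) (close p th)) s_zero s_zero
                (fbound (close p th))) by (intros; apply feval_ub).
      apply Sup_ext; intro d. rewrite <- IH'. cbn [feval teval].
      apply Sup_ext; intro c. rewrite (upd_other _ _ _ _ s) by auto. rewrite upd_comm by auto. reflexivity.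
    + intro rho. cbn [close].
      rewrite (swap_inf K HA HC (close p th) (close p al) y s w sc); auto.
      * cbn [feval]. apply Inf_ext; intro d. apply IH'.
      * apply affine_close; auto.
      * apply focc_close; auto.
      * apply focc_close; auto.
      * apply NoDup4; auto.
Qed.

End Push.
Section Transfer.
Variables M N : LStr.
Variable e : Embedding M N.
Hypothesis Hcof : Cofinal e.
Hypothesis HS : Sigma0_elementary e.

Lemma e_upd (rho : nat -> M) w m : (fun n => e (upd rho w m n)) = upd (fun n => e (rho n)) w (e m).
Proof. apply functional_extensionality; intro n. unfold upd. destruct (Nat.eqb n w); reflexivity. Qed.

Lemma transfer : forall pre th, is_Sigma0 th = true -> NoDup (map snd pre) ->
  (forall b v, In (b, v) pre -> mono N b v th) ->
  forall rho : nat -> M, feval rho (close pre th) = feval (fun n => e (rho n)) (close pre th).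
Proof.
  induction pre as [|[q w] p IH]; intros th Hth Hnd Hm rho.
  - apply HS; auto.
  - simpl in Hnd. inversion Hnd as [|? ? Hnin Hnd']. subst.
    assert (Hmw : mono N q w (close p th)) by (apply mono_close; auto; apply Hm; simpl; auto).
    assert (IH' : forall rho : nat -> M, feval rho (close p th) = feval (fun n => e (rho n)) (close p th))
      by (apply IH; auto; intros; apply Hm; simpl; auto).
    destruct q; cbn [close feval].
    + rewrite (Sup_ext _ (fun m => feval (upd (fun n => e (rho n)) w (e m)) (close p th)))
        by (intro m; rewrite IH'; rewrite e_upd; reflexivity).
      apply Rle_antisym.
      * apply (Sup_lub _ s_zero). intro m.
        apply (Sup_ub (fun c => feval (upd (fun n => e (rho n)) w c) (close p th)) (fbound (close p th))).
        intro; apply feval_ub.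
      * apply (Sup_lub _ s_zero). intro c. destruct (Hcof c) as [m Hle].
        eapply Rle_trans. apply (Hmw (fun n => e (rho n)) c (e m) Hle).
        apply (Sup_ub (fun m => feval (upd (fun n => e (rho n)) w (e m)) (close p th)) (fbound (close p th))).
        intro; apply feval_ub.
    + rewrite (Inf_ext _ (fun m => feval (upd (fun n => e (rho n)) w (e m)) (close p th)))
        by (intro m; rewrite IH'; rewrite e_upd; reflexivity).
      apply Rle_antisym.
      * apply (Inf_glb _ s_zero). intro c. destruct (Hcof c) as [m Hle].
        eapply Rle_trans; [|apply (Hmw (fun n => e (rho n)) c (e m) Hle)].
        apply (Inf_lb (fun m => feval (upd (fun n => e (rho n)) w (e m)) (close p th)) (- fbound (close p th))).
        intro; apply feval_lb.
      * apply (Inf_glb _ s_zero). intro m.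
        apply (Inf_lb (fun c => feval (upd (fun n => e (rho n)) w c) (close p th)) (- fbound (close p th))).
        intro; apply feval_lb.
Qed.
End Transfer.
Record Good (B0 : nat) (phi : formula) (pre : list (bool * nat)) (m a : formula) (n n' : nat) : Prop := {
  g_le : (n <= n')%nat;
  g_s0 : is_Sigma0 m = true;
  g_af : is_affine a = true;
  g_nd : NoDup (map snd pre);
  g_rng : forall v, In v (map snd pre) -> (n <= v < n')%nat;
  g_av : allv (fun v => (v < B0 \/ n <= v < n')%nat) a;
  g_sem : forall K : LStr, AA0 K -> Collection K ->
     equivK K m a /\ equivK K phi (close pre m) /\ (forall b v, In (b, v) pre -> mono K b v m)
}.

Lemma indep_of_equiv (K : LStr) X Y v : equivK K X Y -> f_occ v Y = false -> indep K v X.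
Proof. intros H Hf rho c. rewrite !H. apply feval_indep; auto. Qed.

Lemma mono_plus_l (K : LStr) b v X Y : mono K b v X -> indep K v Y -> mono K b v (fplus X Y).
Proof. intros H HY rho c c' Hle. specialize (H rho c c' Hle). simpl. rewrite !HY. destruct b; lra. Qed.

Lemma mono_plus_r (K : LStr) b v X Y : mono K b v Y -> indep K v X -> mono K b v (fplus X Y).
Proof. intros H HX rho c c' Hle. specialize (H rho c c' Hle). simpl. rewrite !HX. destruct b; lra. Qed.

Lemma in_map_snd {A B : Type} (b : A) (v : B) l : In (b, v) l -> In v (map snd l).
Proof. intros H. apply (in_map snd) in H. exact H. Qed.

Section GoodLemmas.
Variable B0 : nat.

Lemma G_atom phi n : (phi = fone \/ exists t u, phi = fdist t u) -> allv (fun v => (v < B0)%nat) phi ->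
  Good B0 phi nil phi phi n n.
Proof.
  intros Hphi Hv. constructor.
  - lia.
  - destruct Hphi as [->|[t [u ->]]]; reflexivity.
  - destruct Hphi as [->|[t [u ->]]]; reflexivity.
  - constructor.
  - simpl; tauto.
  - eapply allv_mono; [|exact Hv]. intros; cbv beta in *; lia.
  - intros K _ _. split; [intro; reflexivity|]. split; [intro; reflexivity|]. simpl; tauto.
Qed.

Lemma G_plus a b pa ma aa pb mb ab n n1 n2 :
  allv (fun v => (v < B0)%nat) a -> allv (fun v => (v < B0)%nat) b -> (B0 <= n)%nat ->
  Good B0 a pa ma aa n n1 -> Good B0 b pb mb ab n1 n2 ->
  Good B0 (fplus a b) (pa ++ pb) (fplus ma mb) (fplus aa ab) n n2.
Proof.
  intros Hva Hvb HB Ga Gb. destruct Ga, Gb. constructor.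
  - lia.
  - simpl. rewrite g_s1, g_s2. reflexivity.
  - simpl. rewrite g_af0, g_af1. reflexivity.
  - rewrite map_app. apply NoDup_app; auto. intros x H1 H2. apply g_rng0 in H1. apply g_rng1 in H2. lia.
  - intros v. rewrite map_app. intros H. apply in_app_or in H. destruct H as [H|H];
      [apply g_rng0 in H | apply g_rng1 in H]; lia.
  - simpl. split; (eapply allv_mono; [|eassumption]); intros; cbv beta in *; lia.
  - intros K HA HC. destruct (g_sem0 K HA HC) as [Ea [Pa Ma]]. destruct (g_sem1 K HA HC) as [Eb [Pb Mb]].
    assert (Ib : forall v, In v (map snd pa) -> indep K v (close pb mb)).
    { intros v Hv. apply (indep_of_equiv K _ b). intro; symmetry; auto.
      apply (allv_focc _ _ _ Hvb). apply g_rng0 in Hv. lia. }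
    assert (Ia : forall v, In v (map snd pb) -> indep K v ma).
    { intros v Hv. apply (indep_of_equiv K _ aa); auto.
      apply (allv_focc _ _ _ g_av0). apply g_rng1 in Hv. lia. }
    assert (Ib' : forall v, In v (map snd pa) -> indep K v mb).
    { intros v Hv. apply (indep_of_equiv K _ ab); auto.
      apply (allv_focc _ _ _ g_av1). apply g_rng0 in Hv. lia. }
    split; [|split].
    + intro rho; simpl; rewrite Ea, Eb; reflexivity.
    + intro rho. simpl. rewrite Pa, Pb. rewrite close_plus_l by auto. rewrite close_app.
      apply close_congr. intro r. simpl. rewrite close_plus_r by auto. reflexivity.
    + intros b0 v Hin. apply in_app_or in Hin. destruct Hin as [Hin|Hin].
      * apply mono_plus_l; auto. apply Ib'. eapply in_map_snd; eauto.
      * apply mono_plus_r; auto. apply Ia. eapply in_map_snd; eauto.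
Qed.

Lemma in_flipr r pre b v : In (b, v) (flipr r pre) ->
  exists b0, In (b0, v) pre /\ b = (if Rlt_dec r 0 then negb b0 else b0).
Proof.
  unfold flipr. destruct (Rlt_dec r 0).
  - intros H. apply in_map_iff in H. destruct H as [[b0 v0] [Heq Hin]]. simpl in Heq. inversion Heq; subst.
    exists b0; auto.
  - intros H; exists b; auto.
Qed.

Lemma G_scale r a pa ma aa n n1 : Good B0 a pa ma aa n n1 ->
  Good B0 (fscale r a) (flipr r pa) (fscale r ma) (fscale r aa) n n1.
Proof.
  intros Ga. destruct Ga. constructor; auto.
  - rewrite flipr_snd; auto.
  - intros v; rewrite flipr_snd; auto.
  - intros K HA HC. destruct (g_sem0 K HA HC) as [Ea [Pa Ma]]. split; [|split].
    + intro rho; simpl; rewrite Ea; reflexivity.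
    + intro rho. simpl. rewrite Pa. apply close_scale.
    + intros b v Hin. apply in_flipr in Hin. destruct Hin as [b0 [Hin ->]]. apply mono_scale. auto.
Qed.

Lemma G_equiv phi psi pre m a n n' : Good B0 phi pre m a n n' ->
  (forall K : LStr, AA0 K -> Collection K -> equivK K phi psi) -> Good B0 psi pre m a n n'.
Proof.
  intros G H. destruct G. constructor; auto.
  intros K HA HC. destruct (g_sem0 K HA HC) as [Ea [Pa Ma]]. split; [|split]; auto.
  intro rho. rewrite <- H by auto. auto.
Qed.

Lemma sup_split (K : LStr) (HA : AA0 K) (F : K -> R) B : (forall c, F c <= B) ->
  Sup F = Sup (fun e => Sup (fun d => F (s_meet d e))).
Proof.
  intros HB. apply Rle_antisym.
  - apply (Sup_lub _ s_zero). intro c.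
    apply Rle_trans with (Sup (fun d => F (s_meet d c))).
    + pose proof (Sup_ub (fun d => F (s_meet d c)) B c ltac:(intro; cbv beta; auto)) as H. simpl in H.
      rewrite meet_idem in H by auto. exact H.
    + apply (Sup_ub (fun e => Sup (fun d => F (s_meet d e))) B c). intro x. apply (Sup_lub _ s_zero). intro; auto.
  - apply (Sup_lub _ s_zero). intro e. apply (Sup_lub _ s_zero). intro d. apply (Sup_ub F B); auto.
Qed.

Lemma G_sup y a pa ma aa n n1 :
  allv (fun v => (v < B0)%nat) a -> (y < B0)%nat -> (B0 <= n)%nat ->
  Good B0 a pa ma aa n n1 ->
  Good B0 (fsup y a) ((true, n1) :: pa) (fbsup y (tvar n1) ma) (fsup y (fsub y n1 aa)) n (S n1).
Proof.
  intros Hva Hy HB Ga. destruct Ga.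
  assert (Hfs : f_occ n1 aa = false) by (apply (allv_focc _ _ _ g_av0); lia).
  assert (Hfsc : f_occ (S n1) aa = false) by (apply (allv_focc _ _ _ g_av0); lia).
  assert (Hfa : f_occ n1 a = false) by (apply (allv_focc _ _ _ Hva); lia).
  assert (Hyn : y <> n1) by lia.
  constructor.
  - lia.
  - simpl. rewrite g_s1. destruct (Nat.eqb_spec n1 y); [lia|reflexivity].
  - simpl. apply affine_fsub; auto.
  - simpl. constructor; auto. intro H. apply g_rng0 in H. lia.
  - intros v [H|H]; [simpl in H; lia| apply g_rng0 in H; lia].
  - simpl. split; [lia|]. apply allv_fsub; [|lia]. eapply allv_mono; [|exact g_av0]. intros; cbv beta in *; lia.
  - intros K HA HC. destruct (g_sem0 K HA HC) as [Ea [Pa Ma]].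
    assert (Ims : indep K n1 ma) by (apply (indep_of_equiv K _ aa); auto).
    split; [|split].
    + intro rho. cbn [feval teval]. apply Sup_ext; intro c.
      rewrite feval_fsub; auto.
      * rewrite upd_same, upd_other by auto. rewrite upd_shadow. apply Ea.
      * eapply allv_mono; [|exact g_av0]. intros; cbv beta in *; lia.
    + intro rho. cbn [close feval teval].
      rewrite (sup_split K HA (fun c => feval (upd rho y c) a) (fbound a)) by (intro; apply feval_ub).
      apply Sup_ext; intro e.
      rewrite <- (push K HA HC y n1 (S n1) pa ma aa); auto; try lia.
      * cbn [feval teval]. apply Sup_ext; intro d. rewrite upd_same.
        rewrite <- Pa. rewrite upd_comm by auto. symmetry. apply feval_indep; auto.
      * intros v Hv. apply g_rng0 in Hv. lia.
    + intros b v [Hin|Hin].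
      * injection Hin as Hb Hv; subst b v. intros rho c c' Hle. cbn [feval teval]. rewrite !upd_same.
        apply (Sup_lub _ s_zero). intro d.
        eapply Rle_trans; [|apply (Sup_ub (fun d0 => feval (upd (upd rho n1 c') y (s_meet d0 c')) ma) (fbound ma) (s_meet d c)); intro; apply feval_ub].
        simpl. rewrite meet_shift by auto.
        rewrite !(upd_comm _ _ n1 y) by auto. rewrite !Ims. lra.
      * assert (Hv : (n <= v < n1)%nat) by (apply g_rng0; eapply in_map_snd; eauto).
        assert (Hvy : v <> y) by lia. assert (Hvn : v <> n1) by lia.
        specialize (Ma b v Hin).
        intros rho c c' Hle. cbn [feval teval]. rewrite !(upd_other _ _ _ _ n1) by auto.
        destruct b.
        -- apply (Sup_le _ _ s_zero (fbound ma)). intro; apply feval_ub.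
           intro d. rewrite !(upd_comm _ _ v y) by auto. apply (Ma (upd rho y (s_meet d (rho n1))) c c' Hle).
        -- apply (Sup_le _ _ s_zero (fbound ma)). intro; apply feval_ub.
           intro d. rewrite !(upd_comm _ _ v y) by auto. apply (Ma (upd rho y (s_meet d (rho n1))) c c' Hle).
Qed.

End GoodLemmas.
Fixpoint tmaxv (t : term) : nat :=
  match t with
  | tvar n => n
  | tzero | tone => 0
  | tadd a b | tmul a b | tmeet a b | tjoin a b => Nat.max (tmaxv a) (tmaxv b)
  end.

Fixpoint fmaxv (phi : formula) : nat :=
  match phi with
  | fone => 0
  | fdist t u => Nat.max (tmaxv t) (tmaxv u)
  | fplus a b => Nat.max (fmaxv a) (fmaxv b)
  | fscale _ a => fmaxv a
  | fsup x a | finf x a => Nat.max x (fmaxv a)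
  | fbsup x t a | fbinf x t a => Nat.max x (Nat.max (tmaxv t) (fmaxv a))
  end.

Lemma tallv_maxv t B : (tmaxv t < B)%nat -> tallv (fun v => (v < B)%nat) t.
Proof. induction t; simpl; intros; try split; try apply IHt1; try apply IHt2; auto; lia. Qed.

Lemma allv_maxv phi B : (fmaxv phi < B)%nat -> allv (fun v => (v < B)%nat) phi.
Proof.
  induction phi; simpl; intros; auto;
  repeat split; try apply tallv_maxv; try apply IHphi; try apply IHphi1; try apply IHphi2; lia.
Qed.

Lemma nf_exists B0 : forall phi, is_affine phi = true -> allv (fun v => (v < B0)%nat) phi ->
  forall n, (B0 <= n)%nat -> exists pre m a n', Good B0 phi pre m a n n'.
Proof.
  induction phi; simpl; intros Haf Hv n Hn; try discriminate.
  - exists nil, fone, fone, n. apply G_atom; auto.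
  - exists nil, (fdist t u), (fdist t u), n. apply G_atom; eauto. simpl; auto.
  - apply andb_true_iff in Haf. destruct Haf as [Ha1 Ha2]. destruct Hv as [Hv1 Hv2].
    destruct (IHphi1 Ha1 Hv1 n Hn) as [pa [ma [aa [n1 Ga]]]].
    assert (Hn1 : (B0 <= n1)%nat) by (destruct Ga; lia).
    destruct (IHphi2 Ha2 Hv2 n1 Hn1) as [pb [mb [ab [n2 Gb]]]].
    exists (pa ++ pb), (fplus ma mb), (fplus aa ab), n2. eapply G_plus; eauto.
  - destruct (IHphi Haf Hv n Hn) as [pa [ma [aa [n1 Ga]]]].
    exists (flipr r pa), (fscale r ma), (fscale r aa), n1. apply G_scale; auto.
  - destruct Hv as [Hx Hv].
    destruct (IHphi Haf Hv n Hn) as [pa [ma [aa [n1 Ga]]]].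
    eexists _, _, _, _. apply G_sup; eauto.
  - destruct Hv as [Hx Hv].
    destruct (IHphi Haf Hv n Hn) as [pa [ma [aa [n1 Ga]]]].
    apply (G_scale B0 (-1)) in Ga.
    pose proof (G_sup B0 x _ _ _ _ _ _ (Hv : allv (fun v => (v < B0)%nat) (fscale (-1) phi)) Hx Hn Ga) as Ga'.
    apply (G_scale B0 (-1)) in Ga'.
    eexists _, _, _, _. eapply G_equiv. exact Ga'.
    intros K _ _ rho. simpl. unfold Inf.
    rewrite (Sup_ext (fun c => -1 * feval (upd rho x c) phi) (fun c => - feval (upd rho x c) phi))
      by (intro; cbv beta; ring). ring.
Qed.

Theorem mainTheorem11 (M N : LStr) (e : Embedding M N) :
  AA0 M -> AA0 N -> Cofinal e -> Sigma0_elementary e ->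
  Collection M -> Collection N -> Elementary e.
Proof.
  intros HM HN Hcof HS CM CN phi Haf rho.
  set (B0 := S (fmaxv phi)).
  destruct (nf_exists B0 phi Haf (allv_maxv phi B0 (Nat.lt_succ_diag_r _)) B0 (le_n _))
    as [pre [m [a [n' G]]]].
  destruct G.
  destruct (g_sem0 M HM CM) as [_ [PM _]].
  destruct (g_sem0 N HN CN) as [_ [PN MN]].
  rewrite PM, PN. apply transfer; auto.
Qed.
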